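(* Let $X$ be a completely regular space and let $\mathcal B\subset\Sigma_X$ be a base for $X$ consisting of co-zero sets. If the family $\{\mathcal P\in[\mathcal B]^{\le\omega}:\mathcal P\subset_!\mathcal B\}$ contains a club, then the family $\{\mathcal P\in[\Sigma_X]^{\le\omega}:\mathcal P\subset_!\Sigma_X\}$ contains a club too.
   Context: $\Sigma_X$ denotes the collection of all co-zero sets of $X$ (sets of the form $f^{-1}((0,1])$ for continuous $f\colon X\to[0,1]$). For a family $\mathcal P$ of open subsets of $X$ contained in a family $\mathcal Q$ of open subsets of $X$, write $\mathcal P\subset_!\mathcal Q$ if for every subfamily $\mathcal S\subset\mathcal P$ and every point $x\notin\operatorname{cl}_X\bigcup\mathcal S$ there exists $W\in\mathcal P$ with $x\in W$ and $W\cap\bigcup\mathcal S=\emptyset$. $[\mathcal Q]^{\le\omega}$ denotes the set of all countable subfamilies of $\mathcal Q$. A family $\mathcal C\subset[\mathcal Q]^{\le\omega}$ is a club if (i) for every increasing sequence $C_1\subset C_2\subset\cdots$ of members of $\mathcal C$, $\bigcup_nC_n\in\mathcal C$, and (ii) every $B\in[\mathcal Q]^{\le\omega}$ is contained in some $C\in\mathcal C$. *)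

(* Defs.v *)
From Stdlib Require Export Reals.
Open Scope R_scope.

Definition set (X : Type) := X -> Prop.
Definition family (X : Type) := set X -> Prop.

Definition is_topology {X : Type} (O : family X) : Prop :=
  O (fun _ => True) /\
  (forall U V, O U -> O V -> O (fun x => U x /\ V x)) /\
  (forall F : family X, (forall U, F U -> O U) -> O (fun x => exists U, F U /\ U x)).

Definition closed_in {X : Type} (O : family X) (F : set X) : Prop :=
  O (fun x => ~ F x).

Definition cl {X : Type} (O : family X) (A : set X) : set X :=
  fun x => forall U, O U -> U x -> exists y, U y /\ A y.

Definition Union {X : Type} (S : family X) : set X :=
  fun x => exists U, S U /\ U x.

Definition R_open (V : R -> Prop) : Prop :=
  forall r, V r -> exists eps, 0 < eps /\ forall s, Rabs (s - r) < eps -> V s.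

Definition continuous {X : Type} (O : family X) (f : X -> R) : Prop :=
  forall V, R_open V -> O (fun x => V (f x)).

(* completely regular in Engelking's sense: T1 + functional separation of points from closed sets *)
Definition completely_regular {X : Type} (O : family X) : Prop :=
  (forall x y : X, x <> y -> exists U, O U /\ U x /\ ~ U y) /\
  (forall (F : set X) (x : X), closed_in O F -> ~ F x ->
     exists f : X -> R, continuous O f /\ (forall z, 0 <= f z <= 1) /\
       f x = 0 /\ (forall z, F z -> f z = 1)).

Definition cozero_sets {X : Type} (O : family X) : family X :=
  fun U => exists f : X -> R, continuous O f /\ (forall z, 0 <= f z <= 1) /\
    (forall x, U x <-> 0 < f x <= 1).

Definition is_base {X : Type} (O : family X) (B : family X) : Prop :=
  (forall U, B U -> O U) /\
  (forall U x, O U -> U x -> exists V, B V /\ V x /\ forall y, V y -> U y).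

Definition subfam {X : Type} (P Q : family X) : Prop := forall U, P U -> Q U.

Definition subbang {X : Type} (O : family X) (P Q : family X) : Prop :=
  subfam P Q /\
  forall S : family X, subfam S P -> forall x, ~ cl O (Union S) x ->
    exists W, P W /\ W x /\ (forall y, W y -> ~ Union S y).

Definition countable_family {X : Type} (P : family X) : Prop :=
  exists g : nat -> set X, forall U, P U -> exists n, U = g n.

Definition countable_sub {X : Type} (Q P : family X) : Prop :=
  subfam P Q /\ countable_family P.

Definition club {X : Type} (Q : family X) (C : family X -> Prop) : Prop :=
  (forall P, C P -> countable_sub Q P) /\
  (forall Cn : nat -> family X, (forall n, C (Cn n)) ->
     (forall n, subfam (Cn n) (Cn (S n))) ->
     C (fun U => exists n, Cn n U)) /\
  (forall P, countable_sub Q P -> exists P', C P' /\ subfam P P').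

(* Main.v *)
Require Import Defs.
From Stdlib Require Import Reals Lra Lia ClassicalEpsilon FunctionalExtensionality PropExtensionality Cantor.
Require Import Defs.
Open Scope R_scope.

Section H.
Context {X : Type}.

Lemma fam_ext (A A' : family X) : (forall V, A V <-> A' V) -> A = A'.
Proof.
  intro H. apply functional_extensionality. intro V. apply propositional_extensionality. apply H.
Qed.

Lemma countable_mono (A A' : family X) : subfam A A' -> countable_family A' -> countable_family A.
Proof.
  intros H [g Hg]. exists g. intros U HU. apply Hg, H, HU.
Qed.

Lemma countable_single (V : set X) : countable_family (fun U => U = V).
Proof. exists (fun _ => V). intros U HU. exists 0%nat. exact HU. Qed.

Lemma countable_bigunion (Fs : nat -> family X) :
  (forall n, countable_family (Fs n)) -> countable_family (fun U => exists n, Fs n U).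
Proof.
  intro H.
  set (e := fun n => epsilon (inhabits (fun _ : nat => fun _ : X => True))
            (fun g => forall U, Fs n U -> exists k, U = g k)).
  exists (fun k => let (a, b) := Cantor.of_nat k in e a b).
  intros U [n HU].
  assert (He : forall U, Fs n U -> exists k, U = e n k).
  { unfold e. apply epsilon_spec. apply H. }
  destruct (He U HU) as [j Hj].
  exists (Cantor.to_nat (n, j)). rewrite Cantor.cancel_of_to. exact Hj.
Qed.

Lemma cl_mono (O : family X) (A A' : set X) x : (forall y, A y -> A' y) -> cl O A x -> cl O A' x.
Proof.
  intros H Hc U HU Ux. destruct (Hc U HU Ux) as [y [Uy Ay]]. exists y. split; auto.
Qed.

End H.

Lemma R_open_gt c : R_open (fun r => c < r).
Proof.
  intros r Hr. exists (r - c). split. lra.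
  intros s Hs. apply Rabs_def2 in Hs. lra.
Qed.

Lemma R_open_lt c : R_open (fun r => r < c).
Proof.
  intros r Hr. exists (c - r). split. lra.
  intros s Hs. apply Rabs_def2 in Hs. lra.
Qed.

Theorem corollary2p8 (X : Type) (O : family X) (B : family X) :
  is_topology O -> completely_regular O ->
  is_base O B -> subfam B (cozero_sets O) ->
  (exists C, club B C /\
     forall P, C P -> countable_sub B P /\ subbang O P B) ->
  exists C, club (cozero_sets O) C /\
     forall P, C P -> countable_sub (cozero_sets O) P /\ subbang O P (cozero_sets O).
Proof.
  intros Htop _ Hbase HBS [C [[C1 [C2 C3]] HC]].
  destruct Htop as [_ [Hint _]].
  set (Cp := fun Q : family X =>
    countable_sub (cozero_sets O) Q /\ C (fun V => Q V /\ B V) /\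
    forall U, Q U -> forall x, U x -> exists V, (Q V /\ B V) /\ V x /\ forall y, V y -> U y).
  assert (Hbang : forall Q, Cp Q -> subbang O Q (cozero_sets O)).
  { intros Q [[Q1 Q2] [Q3 Q4]]. split; [exact Q1|].
    intros S HS x Hx.
    set (S' := fun V => (Q V /\ B V) /\ exists U, S U /\ forall y, V y -> U y).
    destruct (HC _ Q3) as [_ [_ Hb]].
    assert (HS' : subfam S' (fun V => Q V /\ B V)) by (intros V HV; apply HV).
    destruct (Hb S' HS' x) as [W [HW [Wx HWd]]].
    - intro Hc. apply Hx. apply (cl_mono O (Union S')); [|exact Hc].
      intros y [V [[_ [U [SU VU]]] Vy]]. exists U. split; auto.
    - exists W. split; [apply HW|]. split; [exact Wx|].
      intros y Wy [U [SU Uy]].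
      destruct (Q4 U (HS U SU) y Uy) as [V [QV [Vy VU]]].
      apply (HWd y Wy). exists V. split; [|exact Vy]. split; [exact QV|]. exists U. auto. }
  exists Cp. split; [| intros P HP; split; [apply HP | apply Hbang, HP]].
  split; [intros P HP; apply HP|]. split.
  -
    intros Qn HQ Hinc. split; [split|split].
    + intros U [n HU]. apply (HQ n), HU.
    + apply countable_bigunion. intro n. apply (HQ n).
    + assert (E : (fun V => (exists n, Qn n V) /\ B V) = (fun V => exists n, (fun V => Qn n V /\ B V) V)).
      { apply fam_ext. intro V. split.
        - intros [[n H] HB]. exists n. auto.
        - intros [n [H HB]]. split; [exists n|]; auto. }
      rewrite E. apply C2.
      * intro n. apply (HQ n).
      * intros n V [H HB]. split; [apply Hinc|]; auto.
    + intros U [n HU] x Ux.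
      destruct (HQ n) as [_ [_ H4]].
      destruct (H4 U HU x Ux) as [V [[QV BV] [Vx VU]]].
      exists V. split; [split; [exists n|]|]; auto.
  -
    intros R [HRs [g Hg]].
    set (inhf := inhabits (fun _ : X => 0)).
    set (inhs := inhabits (fun _ : X => True)).
    set (fs := fun i => epsilon inhf (fun f => continuous O f /\ (forall z, 0 <= f z <= 1) /\
                 forall x, g i x <-> 0 < f x <= 1)).
    assert (Hfs : forall i, R (g i) -> continuous O (fs i) /\ (forall z, 0 <= fs i z <= 1) /\
                 forall x, g i x <-> 0 < fs i x <= 1).
    { intros i Hi. unfold fs. apply epsilon_spec. apply HRs, Hi. }
    set (spec := fun i m (W V : set X) => B V /\ (forall z, V z -> fs i z < / (INR m + 1)) /\
                   exists z, V z /\ W z).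
    set (wit := fun i m W => epsilon inhs (spec i m W)).
    set (plus := fun P : family X => fun V => P V \/
                   exists W i m, P W /\ V = wit i m W /\ spec i m W V).
    assert (Hplus : forall P, countable_sub B P -> countable_sub B (plus P)).
    { intros P [PB [h Hh]]. split.
      - intros V [HV | [W [i [m [_ [_ Hs]]]]]]; [apply PB, HV | apply Hs].
      - apply (countable_mono _ (fun U => exists n,
            (fun n => match n with O => P | S _ => fun U => exists k, (fun k U => exists i, (fun i U =>
               exists m, (fun m U => U = wit i m (h k)) m U) i U) k U end) n U)).
        + intros V [HV | [W [i [m [PW [HVe _]]]]]].
          * exists 0%nat. exact HV.
          * exists 1%nat. destruct (Hh W PW) as [k Hk]. exists k, i, m. subst. reflexivity.
        + apply countable_bigunion. intros [|n].
          * exists h. exact Hh.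
          * apply countable_bigunion. intro k. apply countable_bigunion. intro i.
            apply countable_bigunion. intro m. apply countable_single. }
    set (seed := fun V => R V /\ B V).
    set (inhP := inhabits (fun _ : set X => True)).
    set (P0 := epsilon inhP (fun P' => C P' /\ subfam seed P')).
    set (step := fun P => epsilon inhP (fun P' => C P' /\ subfam (plus P) P')).
    set (seqP := fun n => nat_rect (fun _ => family X) P0 (fun _ P => step P) n).
    assert (HP0 : C P0 /\ subfam seed P0).
    { unfold P0. apply epsilon_spec. apply C3. split.
      - intros V HV. apply HV.
      - exists g. intros U HU. apply Hg, HU. }
    assert (Hstep : forall P, C P -> C (step P) /\ subfam (plus P) (step P)).
    { intros P HP. unfold step. apply epsilon_spec. apply C3. apply Hplus. apply C1. exact HP. }
    assert (HseqC : forall n, C (seqP n) /\ subfam (plus (seqP n)) (seqP (S n))).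
    { intro n. induction n as [|n IH].
      - split; [apply HP0 | apply (Hstep P0 (proj1 HP0))].
      - split; [apply (Hstep _ (proj1 IH)) | apply (Hstep (seqP (S n)) (proj1 (Hstep _ (proj1 IH))))]. }
    set (Pinf := fun V => exists n, seqP n V).
    assert (HCinf : C Pinf).
    { apply C2. intro n; apply HseqC. intros n V HV. apply (proj2 (HseqC n)). left. exact HV. }
    assert (HPinfB : subfam Pinf B) by (apply (C1 _ HCinf)).
    assert (Hclose : forall W i m, Pinf W -> (exists V, spec i m W V) -> exists V, Pinf V /\ spec i m W V).
    { intros W i m [n HW] Hex. exists (wit i m W).
      assert (Hs : spec i m W (wit i m W)) by (unfold wit; apply epsilon_spec; exact Hex).
      split; [|exact Hs]. exists (S n). apply (proj2 (HseqC n)). right.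
      exists W, i, m. auto. }
    assert (Hkey : forall i, R (g i) -> forall x, g i x -> exists V, Pinf V /\ V x /\ forall y, V y -> g i y).
    { intros i Ri x Hx. destruct (Hfs i Ri) as [Hc [H01 Hiff]].
      apply Hiff in Hx.
      destruct (archimed_cor1 (fs i x) (proj1 Hx)) as [N [HN HN0]].
      destruct N as [|m]; [lia|]. rewrite S_INR in HN.
      assert (Hcpos : 0 < / (INR m + 1)) by (apply Rinv_0_lt_compat; pose proof (pos_INR m); lra).
      set (S := fun V => Pinf V /\ forall z, V z -> fs i z < / (INR m + 1)).
      destruct (proj2 (proj2 (HC _ HCinf)) S (fun V HV => proj1 HV) x) as [W [PW [Wx HWd]]].
      - intro Hcl.
        destruct (Hcl (fun z => / (INR m + 1) < fs i z) (Hc _ (R_open_gt _)) HN) as [y [Hy [V [[_ HV] Vy]]]].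
        specialize (HV y Vy). lra.
      - exists W. split; [exact PW|]. split; [exact Wx|].
        intros y Wy. apply Hiff.
        destruct (Rlt_le_dec (fs i y) (/ (INR m + 1))) as [Hlt|Hle].
        + exfalso.
          assert (Hop : O (fun z => W z /\ fs i z < / (INR m + 1))).
          { apply Hint. apply (proj1 Hbase), HPinfB, PW. apply (Hc _ (R_open_lt _)). }
          destruct (proj2 Hbase _ y Hop (conj Wy Hlt)) as [V [BV [Vy VW]]].
          destruct (Hclose W i m PW) as [V' [PV' [_ [HV' [z [V'z Wz]]]]]].
          { exists V. split; [exact BV|]. split.
            - intros z Vz. apply (VW z Vz).
            - exists y. split; [exact Vy|exact Wy]. }
          apply (HWd z Wz). exists V'. split; [split; [exact PV'|exact HV']|exact V'z].
        + split; [lra | apply H01]. }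
    exists (fun U => R U \/ Pinf U). split; [|intros U HU; left; exact HU].
    split; [split|split].
    + intros U [HU|HU]; [apply HRs, HU | apply HBS, HPinfB, HU].
    + apply (countable_mono _ (fun U => exists n, (fun n => match n with O => R | _ => Pinf end) n U)).
      * intros U [HU|HU]; [exists 0%nat | exists 1%nat]; exact HU.
      * apply countable_bigunion. intros [|n]; [exists g; exact Hg | apply (C1 _ HCinf)].
    + assert (E : (fun V => (R V \/ Pinf V) /\ B V) = Pinf).
      { apply fam_ext. intro V. split.
        - intros [[HR|HP] HB]; [|exact HP]. exists 0%nat. apply (proj2 HP0). split; assumption.
        - intro HP. split; [right; exact HP | apply HPinfB, HP]. }
      rewrite E. exact HCinf.
    + intros U [HU|HU] x Ux.
      * destruct (Hg U HU) as [i Hi]. subst U.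
        destruct (Hkey i HU x Ux) as [V [PV [Vx VU]]].
        exists V. split; [split; [right|apply HPinfB]; exact PV|]. auto.
      * exists U. split; [split; [right; exact HU|apply HPinfB, HU]|]. auto.
Qed.
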